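(* If $T\in\mathcal{T}^*_3$ has root $v$ and $n$ vertices of which $k$ are not leaves, then $\lambda(T,v)\ge\frac{n+1}{2}+\frac{k-1}{10}$.
   Context: All trees are finite. $\mathcal{T}^*_3$ is the set of rooted trees in which the root has degree at least 2 and every other vertex of degree at least 2 has degree at least 3, together with the single-vertex rooted tree. Here leaves are the non-root vertices of degree 1; the root is counted among the $k$ non-leaf vertices. A subtree is a nonempty vertex set inducing a connected subgraph, and $\lambda(T,v)$ is the average number of vertices over all subtrees of $T$ containing $v$. *)

(* Defs.v *)
From mathcomp Require Import all_boot all_order all_algebra.
Set Implicit Arguments. Unset Strict Implicit. Unset Printing Implicit Defensive.
Import Order.TTheory GRing.Theory Num.Theory.

(* Tree: connected and with exactly #|T| - 1 (undirected) edges; the set of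
   ordered pairs (x,y) with e x y counts each edge twice. *)
Definition is_tree (T : finType) (e : rel T) : Prop :=
  [/\ symmetric e, irreflexive e,
      (forall x y, connect e x y) &
      #|[set p : T * T | e p.1 p.2]| = (#|T|.-1).*2 ].

Definition deg (T : finType) (e : rel T) (x : T) : nat := #|[set y | e x y]|.

Definition in_T3star (T : finType) (e : rel T) (v : T) : Prop :=
  #|T| = 1%N \/
  (2 <= deg e v /\ forall x, x != v -> 2 <= deg e x -> 3 <= deg e x)%N.

Definition leaf (T : finType) (e : rel T) (v x : T) : bool :=
  (x != v) && (deg e x == 1%N).

Definition num_nonleaves (T : finType) (e : rel T) (v : T) : nat :=
  #|[set x | ~~ leaf e v x]|.

Definition induced (T : finType) (e : rel T) (S : {set T}) : rel T :=
  [rel x y | [&& x \in S, y \in S & e x y]].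

Definition is_subtree (T : finType) (e : rel T) (S : {set T}) : bool :=
  (S != set0) && [forall x in S, forall y in S, connect (induced e S) x y].

Definition subtrees_at (T : finType) (e : rel T) (v : T) : {set {set T}} :=
  [set S : {set T} | is_subtree e S && (v \in S)].

Definition lambda (T : finType) (e : rel T) (v : T) : rat :=
  ((\sum_(S in subtrees_at e v) #|S|)%:R / (#|subtrees_at e v|)%:R)%R.

(* Main.v *)
Require Import Defs.
From mathcomp Require Import all_boot all_order all_algebra.
From mathcomp Require Import zify ring lra.
Import Order.TTheory GRing.Theory Num.Theory.
Set Implicit Arguments. Unset Strict Implicit. Unset Printing Implicit Defensive.

Fixpoint reach (T : finType) (f : rel T) (a : T) (m : nat) : {set T} :=
  if m is m'.+1 then reach f a m' :|: [set y | [exists x in reach f a m', f x y]]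
  else [set a].

Lemma reach_path (T : finType) (f : rel T) a x p m :
  path f x p -> x \in reach f a m -> last x p \in reach f a (m + size p).
Proof.
elim: p x m => [|y p IH] x m /=; first by rewrite addn0.
move=> /andP [fxy pth] xin.
have yin : y \in reach f a m.+1.
  by rewrite /= inE; apply/orP; right; rewrite inE; apply/existsP; exists x; rewrite xin.
by rewrite -addSnnS; apply: IH.
Qed.

Lemma sum_bool (T : finType) (A : {set T}) (P : pred T) :
  \sum_(x in A) (P x : nat) = #|[set x in A | P x]|.
Proof.
rewrite -sum1_card big_mkcond /= [RHS]big_mkcond /=.
by apply: eq_bigr => x _; rewrite inE; case: (x \in A); case: (P x).
Qed.

Lemma edges_lb (T : finType) (f : rel T) (a : T) :
  symmetric f -> (forall x, connect f a x) ->
  ((#|T|.-1).*2 <= #|[set p : T * T | f p.1 p.2]|)%N.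
Proof.
move=> fsym fcon.
have ex x : exists m, x \in reach f a m.
  have /connectP [p pth ->] := fcon x.
  exists (0 + size p); apply: reach_path => //; by rewrite /= inE.
pose dist x := ex_minn (ex x).
have parex x : x != a -> exists y, f y x && (dist y < dist x).
  move=> xa; rewrite /dist; case: ex_minnP => m xm mmin.
  move: xm; case: m mmin => [|m] mmin /=; first by rewrite inE (negPf xa).
  rewrite inE => /orP [xm|].
    by have := mmin _ xm; rewrite ltnn.
  rewrite inE => /existsP [y /andP [ym fyx]].
  exists y; rewrite fyx /=; case: ex_minnP => k _ kmin.
  by apply: leq_ltn_trans (kmin _ ym) _.
pose par x := odflt x [pick y | f y x && (dist y < dist x)].
have parP x : x != a -> f (par x) x && (dist (par x) < dist x).
  move=> xa; rewrite /par; case: pickP => [y -> //|none].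
  by have [y] := parex x xa; rewrite none.
pose g (u : T * bool) := if u.2 then (u.1, par u.1) else (par u.1, u.1).
pose D := setX [set~ a] [set: bool].
have cD : #|D| = (#|T|.-1).*2.
  by rewrite cardsX cardsC1 cardsT card_bool muln2.
have ginj : {in D &, injective g}.
  move=> [x b] [y b']; rewrite !inE /= => /andP [xa _] /andP [ya _].
  have := parP _ xa; have := parP _ ya.
  case: b; case: b'; rewrite /g /= => /andP [_ dy] /andP [_ dx] [].
  - by move=> -> _.
  - move=> e1 e2; move: dx dy; rewrite -e1 e2 => dx dy.
    by have := ltn_trans dx dy; rewrite ltnn.
  - move=> e1 e2; move: dx dy; rewrite e1 -e2 => dx dy.
    by have := ltn_trans dx dy; rewrite ltnn.
  - by move=> _ ->.
apply: leq_trans (subset_leq_card (_ : g @: D \subset _)).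
  by rewrite (card_in_imset ginj) cD.
apply/subsetP => _ /imsetP [[x b] xD ->]; move: xD; rewrite !inE /= => /andP [xa _].
have /andP [fp _] := parP _ xa.
by case: b; rewrite /g /= ?fp // fsym.
Qed.

Definition connset (T : finType) (e : rel T) (A : {set T}) :=
  forall x y, x \in A -> y \in A -> connect (induced e A) x y.
Definition acyc (T : finType) (e : rel T) (A : {set T}) :=
  forall x y z, x \in A -> y \in A -> z \in A -> y != z -> e x y -> e x z ->
    ~~ connect (induced e (A :\ x)) y z.

Lemma inducedE (T : finType) (e : rel T) (A : {set T}) x y :
  induced e A x y = [&& x \in A, y \in A & e x y].
Proof. by []. Qed.

Lemma induced_sub (T : finType) (e : rel T) (A B : {set T}) x y :
  A \subset B -> connect (induced e A) x y -> connect (induced e B) x y.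
Proof.
move=> /subsetP AB; apply: connect_sub => u w; rewrite inducedE => /and3P [uA wA euw].
by apply: connect1; rewrite /induced /= (AB _ uA) (AB _ wA) euw.
Qed.

Lemma conn_in (T : finType) (e : rel T) (A : {set T}) x y :
  connect (induced e A) x y -> x \in A -> y \in A.
Proof.
move=> /connectP [p pth ->]; elim: p x pth => [|z p IH] x //= /andP [/and3P [_ zA _] pth] _.
exact: IH.
Qed.

Lemma induced_sym (T : finType) (e : rel T) (A : {set T}) :
  symmetric e -> symmetric (induced e A).
Proof. by move=> es x y; rewrite !inducedE es andbCA. Qed.

Lemma csym (T : finType) (e : rel T) (A : {set T}) x y :
  symmetric e -> connect (induced e A) x y = connect (induced e A) y x.
Proof. by move=> es; apply: sym_connect_sym; apply: induced_sym. Qed.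

Lemma acyc_tree (T : finType) (e : rel T) : is_tree e -> acyc e setT.
Proof.
case=> es eirr econ ecard x y z _ _ _ yz exy exz.
apply/negP => cyz.
pose e' : rel T := fun a b => e a b && ~~ (((a == x) && (b == y)) || ((a == y) && (b == x))).
have e'sym : symmetric e'.
  move=> a b; rewrite /e' es; congr (_ && ~~ _); rewrite orbC; congr (_ || _); exact: andbC.
have xy : x != y by apply: contraTneq exy => ->; rewrite eirr.
have sub1 : subrel (induced e (setT :\ x)) e'.
  move=> a b; rewrite inducedE => /and3P; rewrite !inE !andbT => [[ax bx eab]].
  by rewrite /e' eab (negPf ax) (negPf bx) /= andbF.
have cyz' : connect e' y z by apply: connect_sub cyz => a b /sub1; apply: connect1.
have exz' : e' x z by rewrite /e' exz eqxx [z == y]eq_sym (negPf yz) (negPf xy).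
have con' : forall a b, connect e' a b.
  move=> a b; apply: connect_sub (econ a b) => u w euw.
  case: (boolP (((u == x) && (w == y)) || ((u == y) && (w == x)))) => [|nH].
    case/orP => /andP [/eqP -> /eqP ->].
      apply: connect_trans (connect1 exz') _.
      by rewrite (sym_connect_sym e'sym).
    apply: connect_trans cyz' _; apply: connect1; by rewrite e'sym.
  by apply: connect1; rewrite /e' euw nH.
have := edges_lb e'sym (con' x).
have -> : [set p : T * T | e' p.1 p.2] =
          [set p : T * T | e p.1 p.2] :\: [set (x, y); (y, x)].
  apply/setP => [[a b]]; rewrite !inE /= !xpair_eqE andbC; congr (_ && _).
rewrite cardsD ecard.
have -> : [set p : T * T | e p.1 p.2] :&: [set (x, y); (y, x)] = [set (x, y); (y, x)].
  apply/setIidPr/subsetP => p; rewrite !inE => /orP [] /eqP -> /=; by rewrite // es.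
rewrite cards2 xpair_eqE (negPf xy) /=.
have : (2 <= #|T|)%N.
  by apply: leq_trans (max_card (mem [set x; y])); rewrite cards2 xy.
case: #|T| => [|n] //= h; rewrite -!muln2; lia.
Qed.

Lemma closed_path (T : finType) (e : rel T) (B D : {set T}) z x p :
  x \in B -> (forall u y, u \in B -> u != z -> y \in D -> e u y -> y \in B) ->
  path (induced e D) x p -> (last x p == z) || (last x p \notin B) ->
  (z \in B) && connect (induced e B) x z.
Proof.
move=> + cl; elim: p x => [|y p IH] x /= xB.
  by move=> _ /orP [/eqP <-|]; rewrite ?xB ?connect0.
rewrite inducedE => /andP [/and3P [xD yD exy] pth] H.
case: (x =P z) => [<-|/eqP xz]; first by rewrite xB connect0.
have yB := cl _ _ xB xz yD exy.
have /andP [zB cyz] := IH y yB pth H.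
rewrite zB; apply: connect_trans cyz; apply: connect1; by rewrite inducedE xB yB exy.
Qed.

Lemma subtreeP (T : finType) (e : rel T) (S : {set T}) :
  reflect (S != set0 /\ connset e S) (is_subtree e S).
Proof.
rewrite /is_subtree; apply: (iffP andP) => [[-> /forall_inP H]|[-> H]]; split => //.
  by move=> x y xS yS; have /forall_inP := H x xS; apply.
by apply/forall_inP => x xS; apply/forall_inP => y yS; apply: H.
Qed.

Lemma connset_root (T : finType) (e : rel T) (S : {set T}) r :
  symmetric e -> r \in S -> (forall x, x \in S -> connect (induced e S) x r) -> connset e S.
Proof.
move=> es rS H x y xS yS; apply: connect_trans (H x xS) _.
by rewrite csym //; apply: H.
Qed.

Definition degA (T : finType) (e : rel T) (A : {set T}) x := #|[set y in A | e x y]|.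
Definition leafA (T : finType) (e : rel T) (A : {set T}) r x := (x != r) && (degA e A x == 1%N).
Definition nleaves (T : finType) (e : rel T) (A : {set T}) r := (\sum_(x in A) leafA e A r x)%N.
Definition t3 (T : finType) (e : rel T) (A : {set T}) r :=
  forall x, x \in A -> x != r -> (2 <= degA e A x)%N -> (3 <= degA e A x)%N.
Definition subs (T : finType) (e : rel T) (A : {set T}) r :=
  [set S : {set T} | [&& is_subtree e S, r \in S & S \subset A]].
Definition ssum (T : finType) (e : rel T) (A : {set T}) r :=
  (\sum_(S in subs e A r) #|S|)%N.

Lemma acyc_sub (T : finType) (e : rel T) (A B : {set T}) :
  B \subset A -> acyc e A -> acyc e B.
Proof.
move=> /subsetP BA ac x y z xB yB zB yz exy exz; apply/negP => c.
have := ac x y z (BA _ xB) (BA _ yB) (BA _ zB) yz exy exz.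
move/negP; apply; apply: induced_sub c; apply/subsetP => u; rewrite !inE.
by case/andP => -> /BA.
Qed.

Lemma nleaves_lt (T : finType) (e : rel T) (A : {set T}) r :
  r \in A -> (nleaves e A r < #|A|)%N.
Proof.
move=> rA; rewrite /nleaves (bigD1 r) //= /leafA eqxx /= add0n.
rewrite (cardsD1 r A) rA add1n ltnS -sum1_card.
rewrite (eq_bigl (fun i => i \in A :\ r)); last by move=> i; rewrite !inE andbC.
apply: leq_sum => x _; exact: leq_b1.
Qed.

Lemma subs_size (T : finType) (e : rel T) (A : {set T}) r :
  (#|subs e A r| <= ssum e A r <= #|A| * #|subs e A r|)%N.
Proof.
rewrite /ssum; apply/andP; split.
  rewrite -sum1_card; apply: leq_sum => S; rewrite inE => /and3P [/subtreeP [S0 _] _ _].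
  by rewrite card_gt0.
rewrite mulnC -sum_nat_const; apply: leq_sum => S; rewrite inE => /and3P [_ _ SA].
exact: subset_leq_card.
Qed.

Lemma setU_split (T : finType) (X Q A C : {set T}) :
  X \subset A :\: C -> Q \subset C -> (X :|: Q) :&: (A :\: C) = X /\ (X :|: Q) :&: C = Q.
Proof.
move=> /subsetP XA /subsetP QC; split; apply/setP => x; rewrite !inE;
have := XA x; have := QC x; rewrite !inE;
case: (x \in X); case: (x \in Q); case: (x \in C); case: (x \in A) => //= H1 H2;
by [ have := H1 isT | have := H2 isT ].
Qed.

Lemma memsubs (T : finType) (e : rel T) (A : {set T}) r S :
  (S \in subs e A r) = [&& is_subtree e S, r \in S & S \subset A].
Proof. by rewrite inE. Qed.

Lemma split_facts (T : finType) (e : rel T) (A : {set T}) r c (C : {set T}) :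
  symmetric e -> irreflexive e ->
  r \in A -> c \in A -> e r c -> connset e A -> acyc e A -> t3 e A r ->
  C = [set x | connect (induced e (A :\ r)) c x] ->
  [/\ r \in A :\: C, c \in C, #|A| = (#|A :\: C| + #|C|)%N, connset e (A :\: C) & connset e C] /\
  [/\ acyc e (A :\: C), acyc e C, t3 e (A :\: C) r, t3 e C c & degA e A r = (degA e (A :\: C) r).+1] /\
  [/\ degA e A c = (degA e C c).+1,
      nleaves e A r = (nleaves e (A :\: C) r + nleaves e C c + (degA e C c == 0%N))%N,
      (degA e C c == 0%N) -> #|C| = 1%N,
      #|subs e A r| = (#|subs e (A :\: C) r| * (#|subs e C c|).+1)%N &
      ssum e A r = (ssum e (A :\: C) r * (#|subs e C c|).+1 + #|subs e (A :\: C) r| * ssum e C c)%N].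
Proof.
move=> es eirr rA cA erc Acon Aac At3 defC.
have memC x : (x \in C) = connect (induced e (A :\ r)) c x by rewrite defC inE.
clear defC.
have cr : c != r by apply: contraTneq erc => ->; rewrite eirr.
have cAr : c \in A :\ r by rewrite !inE cr.
have cC : c \in C by rewrite memC connect0.
have CAr : C \subset A :\ r by apply/subsetP => x; rewrite memC => /conn_in; apply.
have CA : C \subset A by apply: subset_trans CAr (subD1set A r).
have rC : r \notin C by apply/negP => /(subsetP CAr); rewrite !inE eqxx.
have memA' x : (x \in A :\: C) = (x \notin C) && (x \in A) by rewrite inE.
have cardA : #|A| = (#|A :\: C| + #|C|)%N.
  rewrite cardsD; have -> : A :&: C = C by apply/setIidPr.
  have := subset_leq_card CA; lia.
have A'A : A :\: C \subset A by apply: subsetDl.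
set A' := A :\: C in memA' A'A cardA *; clearbody A'.
have rA' : r \in A' by rewrite memA' rC rA.
have F2 : forall u y, u \in C -> y \in A -> y != r -> e u y -> y \in C.
  move=> u y uC yA yr euy; have uAr := subsetP CAr u uC.
  move: uC; rewrite !memC => cu; apply: connect_trans cu _; apply: connect1.
  by rewrite inducedE uAr !inE yr yA euy.
have F3 : forall y, y \in C -> e r y -> y = c.
  move=> y yC ery; have yA := subsetP CA y yC; apply/eqP; apply: contraTT yC => cy.
  rewrite memC; apply: (Aac r c y rA cA yA _ erc ery).
  by rewrite eq_sym.
have F4 : forall u y, u \in A' -> u != r -> y \in A -> e u y -> y \in A'.
  move=> u y uA' ur yA euy; rewrite memA' yA andbT; apply/negP => yC.
  move: uA'; rewrite memA' => /andP [/negP uC uA]; apply: uC.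
  by apply: (F2 y) => //; rewrite es.
have F5 : forall u y, u \in C -> u != c -> y \in A -> e u y -> y \in C.
  move=> u y uC uc yA euy; case: (y =P r) => [yr|/eqP yr]; last exact: F2 euy.
  by move: euy; rewrite yr es => /(F3 _ uC) /eqP; rewrite (negPf uc).
have A'con : connset e A'.
  apply: (connset_root es rA') => x xA'.
  have /connectP [p pth lp] := Acon x r (subsetP A'A x xA') rA.
  have /andP [_ //] := closed_path xA' F4 pth (introT orP (or_introl (introT eqP (esym lp)))).
have Ccon : connset e C.
  apply: (connset_root es cC) => x xC.
  move: (xC); rewrite memC csym // => /connectP [p pth lp].
  have cl : forall u y, u \in C -> u != c -> y \in A :\ r -> e u y -> y \in C.
    by move=> u y uC uc; rewrite !inE => /andP [yr yA]; apply: F2.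
  have /andP [_ //] := closed_path xC cl pth (introT orP (or_introl (introT eqP (esym lp)))).
have degA' x : x \in A' -> x != r -> degA e A x = degA e A' x.
  move=> xA' xr; rewrite /degA; apply: eq_card => y; rewrite !inE.
  apply/andP/andP => [[yA exy]|[yA' exy]]; split => //.
    exact: F4 exy.
  exact: (subsetP A'A).
have degC x : x \in C -> x != c -> degA e A x = degA e C x.
  move=> xC xc; rewrite /degA; apply: eq_card => y; rewrite !inE.
  apply/andP/andP => [[yA exy]|[yC exy]]; split => //.
    exact: F5 exy.
  exact: (subsetP CA).
have degr : degA e A r = (degA e A' r).+1.
  rewrite /degA -add1n.
  have -> : [set y in A | e r y] = c |: [set y in A' | e r y].
    apply/setP => y; rewrite !inE; apply/andP/orP => [[yA ery]|[/eqP ->|/andP [yA' ery]]].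
    - case: (boolP (y \in C)) => yC; first by left; apply/eqP; apply: F3.
      by right; rewrite ery andbT memA' yC yA.
    - by [].
    - by rewrite ery (subsetP A'A).
  by rewrite cardsU1 inE memA' cC.
have degc : degA e A c = (degA e C c).+1.
  rewrite /degA -add1n.
  have -> : [set y in A | e c y] = r |: [set y in C | e c y].
    apply/setP => y; rewrite !inE; apply/andP/orP => [[yA ecy]|[/eqP ->|/andP [yC ecy]]].
    - case: (y =P r) => [->|/eqP yr]; first by left.
      by right; rewrite ecy andbT; apply: (F2 c).
    - by rewrite rA es.
    - by rewrite ecy (subsetP CA).
  by rewrite cardsU1 inE (negPf rC).
have t3A' : t3 e A' r.
  move=> x xA' xr; rewrite -degA' //; apply: At3 => //; exact: (subsetP A'A).
have t3C : t3 e C c.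
  move=> x xC xc; rewrite -degC //; apply: At3 => //; first exact: (subsetP CA).
  by apply: contraTneq xC => ->.
have acA' : acyc e A' by apply: acyc_sub Aac.
have acC : acyc e C by apply: acyc_sub Aac.
have ACeq : A :&: C = C by apply/setIidPr.
have ADeq : A :\: C = A'.
  by apply/setP => x; rewrite memA' inE.
have nl : nleaves e A r = (nleaves e A' r + nleaves e C c + (degA e C c == 0%N))%N.
  rewrite /nleaves (big_setID C) /= ACeq ADeq addnC -addnA; congr (_ + _)%N.
    apply: eq_bigr => x xA'; rewrite /leafA.
    by case: (x =P r) => [-> //|/eqP xr]; rewrite degA'.
  rewrite (bigD1 c) //= [X in (_ = X + _)%N](bigD1 c) //= addnC.
  rewrite /leafA eqxx /= add0n degc eqSS (negPf cr) /=; congr (_ + _)%N.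
  apply: eq_bigr => x /andP [xC xc]; rewrite degC // xc.
  by have -> : (x != r) by apply: contraTneq xC => ->.
have d0 : (degA e C c == 0%N) -> #|C| = 1%N.
  move=> /eqP d0; rewrite (cardsD1 c) cC.
  suff -> : C :\ c = set0 by rewrite cards0.
  apply/setP => x; rewrite !inE; apply/negP => /andP [xc xC].
  have /connectP [[|y p] /= pth lp] := Ccon c x cC xC.
    by move: xc; rewrite lp eqxx.
  move: pth; rewrite inducedE => /andP [/and3P [_ yC ecy] _].
  have : y \in [set y in C | e c y] by rewrite inE yC ecy.
  by move: d0; rewrite /degA => /eqP; rewrite cards_eq0 => /eqP ->; rewrite inE.
pose G := set0 |: subs e C c.
have memG Q : (Q \in G) = (Q == set0) || (Q \in subs e C c) by rewrite /G in_setU1.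
have s0 : set0 \notin subs e C c.
  by rewrite memsubs; apply/negP => /and3P [/subtreeP [] /eqP].
have cardG : #|G| = (#|subs e C c|).+1 by rewrite /G cardsU1 s0.
have sG : (\sum_(Q in G) #|Q|)%N = ssum e C c by rewrite /G big_setU1 //= cards0.
clearbody G.
have Gsub Q : Q \in G -> Q \subset C.
  rewrite memG => /orP [/eqP ->|]; first exact: sub0set.
  by rewrite memsubs => /and3P [].
pose h (p : {set T} * {set T}) := p.1 :|: p.2.
have key (X Q : {set T}) : X \subset A' -> Q \subset C -> (X :|: Q) :&: A' = X /\ (X :|: Q) :&: C = Q.
  move=> /subsetP XA /subsetP QC; split; apply/setP => x; rewrite !inE ?memA';
  move: (XA x) (QC x); rewrite memA';
  case: (x \in X); case: (x \in Q); case: (x \in C); case: (x \in A) => //= H1 H2;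
  by [ | move: (H1 isT) | move: (H2 isT)].
have hinj : {in setX (subs e A' r) G &, injective h}.
  move=> [X1 Q1] [X2 Q2]; rewrite !in_setX => /andP [hX1 hQ1] /andP [hX2 hQ2].
  rewrite /h /= => heq.
  move: hX1 hX2; rewrite !memsubs => /and3P [_ _ sX1] /and3P [_ _ sX2].
  have [k1 k2] := key X1 Q1 sX1 (Gsub _ hQ1).
  have [k3 k4] := key X2 Q2 sX2 (Gsub _ hQ2).
  by congr pair; [rewrite -k1 heq k3 | rewrite -k2 heq k4].
have eqS : subs e A r = h @: setX (subs e A' r) G.
  apply/setP => S; apply/idP/imsetP.
  - rewrite memsubs => /and3P [/subtreeP [S0 Scon] rS SA].
    exists (S :&: A', S :&: C).
    + rewrite in_setX; apply/andP; split.
      * rewrite memsubs subsetIr andbT in_setI rS rA' !andbT.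
        apply/subtreeP; split; first by apply/set0Pn; exists r; rewrite inE rS rA'.
        apply: (connset_root es (_ : r \in S :&: A')) => [|x xB]; first by rewrite inE rS rA'.
        have /connectP [p pth lp] := Scon x r (subsetP (subsetIl _ _) x xB) rS.
        have cl : forall u y, u \in S :&: A' -> u != r -> y \in S -> e u y -> y \in S :&: A'.
          move=> u y; rewrite inE => /andP [uS uA'] ur yS euy; rewrite inE yS.
          exact: F4 uA' ur (subsetP SA y yS) euy.
        by have /andP [_ ->] := closed_path xB cl pth (introT orP (or_introl (introT eqP (esym lp)))).
      * rewrite memG; case: (boolP (S :&: C == set0)) => [/eqP ->//|/set0Pn [w wB]].
        apply/orP; right.
        have cl : forall u y, u \in S :&: C -> u != c -> y \in S -> e u y -> y \in S :&: C.
          move=> u y; rewrite inE => /andP [uS uC] uc yS euy; rewrite inE yS.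
          exact: F5 uC uc (subsetP SA y yS) euy.
        have reach : forall x, x \in S :&: C -> (c \in S :&: C) && connect (induced e (S :&: C)) x c.
          move=> x xB; have /connectP [p pth lp] := Scon x r (subsetP (subsetIl _ _) x xB) rS.
          by apply: closed_path xB cl pth _; rewrite -lp inE (negPf rC) andbF orbT.
        have /andP [cB _] := reach w wB.
        rewrite memsubs cB subsetIr !andbT; apply/subtreeP; split; first by apply/set0Pn; exists c.
        apply: (connset_root es cB) => x xB; by have /andP [_ ->] := reach x xB.
    + rewrite /h /=; apply/setP => x; rewrite !inE memA'; move: (subsetP SA x).
      by case: (x \in S); case: (x \in C); case: (x \in A) => // H; move: (H isT).
  - move=> [[X Q]]; rewrite in_setX => /andP [hX hQ] ->; rewrite /h /=.
    move: hX; rewrite memsubs => /and3P [/subtreeP [X0 Xcon] rX XA'].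
    rewrite memsubs; apply/and3P; split.
    * apply/subtreeP; split; first by apply/set0Pn; exists r; rewrite inE rX.
      apply: (connset_root es (_ : r \in X :|: Q)) => [|x]; first by rewrite inE rX.
      rewrite inE => /orP [xX|xQ].
        apply: induced_sub (Xcon x r xX rX); exact: subsetUl.
      move: hQ; rewrite memG => /orP [/eqP Q0|]; first by move: xQ; rewrite Q0 inE.
      rewrite memsubs => /and3P [/subtreeP [_ Qcon] cQ QC].
      apply: connect_trans (induced_sub (subsetUr X Q) (Qcon x c xQ cQ)) _.
      by apply: connect1; rewrite inducedE !inE cQ rX orbT es erc.
    * by rewrite inE rX.
    * rewrite subUset; apply/andP; split; first exact: subset_trans XA' A'A.
      exact: subset_trans (Gsub _ hQ) CA.
have Nsplit : #|subs e A r| = (#|subs e A' r| * (#|subs e C c|).+1)%N.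
  by rewrite eqS (card_in_imset hinj) cardsX cardG.
have Ssplit : ssum e A r = (ssum e A' r * (#|subs e C c|).+1 + #|subs e A' r| * ssum e C c)%N.
  rewrite {1}/ssum eqS (big_imset _ hinj) /=.
  rewrite (eq_bigr (fun p : {set T} * {set T} => (#|p.1| + #|p.2|)%N)); last first.
    move=> [X Q]; rewrite in_setX => /andP [hX hQ]; rewrite /h /= cardsU.
    suff -> : X :&: Q = set0 by rewrite cards0 subn0.
    apply/setP => x; rewrite !inE; apply/negP => /andP [xX xQ].
    move: hX; rewrite memsubs => /and3P [_ _ /subsetP XA].
    by move: (XA x xX); rewrite memA' (subsetP (Gsub _ hQ) x xQ).
  rewrite (eq_bigl (fun p => (p.1 \in subs e A' r) && (p.2 \in G))); last by move=> [a b]; rewrite in_setX.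
  rewrite big_split /=.
  rewrite -(pair_big (fun a => a \in subs e A' r) (fun b => b \in G) (fun a b => #|a|)) /=.
  rewrite -(pair_big (fun a => a \in subs e A' r) (fun b => b \in G) (fun a b => #|b|)) /=.
  rewrite exchange_big /= sum_nat_const cardG mulnC; congr (_ + _)%N.
  by rewrite (eq_bigr (fun _ => ssum e C c)) ?sum_nat_const // => i _; rewrite sG.
split; first by split.
by split.
Qed.

Lemma pow_bound L : (2 <= L)%N -> (11 * L <= 4 * 2 ^ L + 6)%N.
Proof.
elim: L => [|L IH] //; case: L IH => [|[|L]] // IH _.
have := IH isT; have : (4 <= 2 ^ L.+2)%N.
  have : (0 < 2 ^ L)%N by rewrite expn_gt0.
  by rewrite !expnS; move: (2 ^ L) => X; lia.
rewrite [2 ^ L.+3]expnS; move: (2 ^ L.+2) => X; lia.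
Qed.

Lemma arith_single (N1 S1 n1 L1 d1 NC SC : nat) :
  (N1 * (5 * n1 + (n1 - L1) + 4) <= 10 * S1)%N -> (2 ^ L1 <= N1)%N ->
  (n1 - L1 + d1 <= L1 + 1)%N -> (L1 < n1)%N -> (1 <= NC)%N -> SC = NC ->
  [/\ (N1 * NC.+1 * (5 * (n1 + 1) + ((n1 + 1) - (L1 + 0 + 1)) + 4) <= 10 * (S1 * NC.+1 + N1 * SC))%N,
      (2 ^ (L1 + 0 + 1) <= N1 * NC.+1)%N &
      ((n1 + 1) - (L1 + 0 + 1) + d1.+1 <= (L1 + 0 + 1) + 1)%N].
Proof.
move=> a1 a2 a3 a4 c2 ->; split.
- have h1 := leq_mul a1 (leqnn NC.+1).
  have h2 : (N1 <= N1 * NC)%N by rewrite -{1}(muln1 N1) leq_mul2l c2 orbT.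
  have -> : ((n1 + 1) - (L1 + 0 + 1) = n1 - L1)%N by lia.
  nia.
- rewrite addn0 expnD expn1; apply: leq_mul => //; lia.
- lia.
Qed.

Lemma arith_multi (N1 S1 n1 L1 d1 NC SC nC LC dC N S n L d : nat) :
  (N1 * (5 * n1 + (n1 - L1) + 4) <= 10 * S1)%N -> (2 ^ L1 <= N1)%N ->
  (n1 - L1 + d1 <= L1 + 1)%N -> (L1 < n1)%N ->
  (NC * (5 * nC + (nC - LC) + 4) <= 10 * SC)%N -> (2 ^ LC <= NC)%N ->
  (nC - LC + dC <= LC + 1)%N -> (LC < nC)%N -> (2 <= dC)%N ->
  N = (N1 * NC.+1)%N -> S = (S1 * NC.+1 + N1 * SC)%N -> n = (n1 + nC)%N ->
  L = (L1 + LC)%N -> d = d1.+1 ->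
  [/\ (N * (5 * n + (n - L) + 4) <= 10 * S)%N, (2 ^ L <= N)%N & (n - L + d <= L + 1)%N].
Proof.
move=> a1 a2 a3 a4 c1 c2 c3 c4 dC2 -> -> -> -> ->.
have LC2 : (2 <= LC)%N by lia.
have pb := pow_bound LC2.
have kb : (5 * nC + (nC - LC) <= 4 * NC)%N.
  move: pb c2; move: (2 ^ LC) => X; lia.
split.
- have -> : ((n1 + nC) - (L1 + LC) = (n1 - L1) + (nC - LC))%N by lia.
  have h1 := leq_mul a1 (leqnn NC.+1).
  have h2 := leq_mul (leqnn N1) c1.
  have h3 := leq_mul (leqnn N1) kb.
  move: h1 h2 h3; move: (n1 - L1) (nC - LC) => k1 kC; nia.
- rewrite expnD; apply: leq_mul => //; lia.
- lia.
Qed.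

Lemma arith_single' (N1 S1 n1 L1 d1 NC SC N S n L d : nat) :
  (N1 * (5 * n1 + (n1 - L1) + 4) <= 10 * S1)%N -> (2 ^ L1 <= N1)%N ->
  (n1 - L1 + d1 <= L1 + 1)%N -> (L1 < n1)%N -> (1 <= NC)%N -> SC = NC ->
  N = (N1 * NC.+1)%N -> S = (S1 * NC.+1 + N1 * SC)%N -> n = (n1 + 1)%N ->
  L = (L1 + 1)%N -> d = d1.+1 ->
  [/\ (N * (5 * n + (n - L) + 4) <= 10 * S)%N, (2 ^ L <= N)%N & (n - L + d <= L + 1)%N].
Proof.
move=> a1 a2 a3 a4 c2 eS -> -> -> -> ->.
have [] := arith_single a1 a2 a3 a4 c2 eS; rewrite addn0 => h1 h2 h3; split => //.
Qed.

Lemma main_ind (T : finType) (e : rel T) : symmetric e -> irreflexive e ->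
  forall m (A : {set T}) r, #|A| = m -> r \in A -> connset e A -> acyc e A -> t3 e A r ->
  [/\ (#|subs e A r| * (5 * #|A| + (#|A| - nleaves e A r) + 4) <= 10 * ssum e A r)%N,
      (2 ^ nleaves e A r <= #|subs e A r|)%N &
      (#|A| - nleaves e A r + degA e A r <= nleaves e A r + 1)%N].
Proof.
move=> es eirr m; elim/ltn_ind: m => m IH A r mA rA Acon Aac At3.
have Lr := nleaves_lt e rA.
have /andP [sz1 sz2] := subs_size e A r.
case: (leqP #|A| 1) => hA.
  have Ar : A = [set r].
    by apply/eqP; rewrite eq_sym eqEcard sub1set rA cards1.
  have d0 : degA e A r = 0%N.
    rewrite /degA; apply/eqP; rewrite cards_eq0; apply/eqP/setP => y.
    rewrite !inE Ar inE; case: (y =P r) => [->|]; by rewrite ?eirr ?andbF.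
  have N1 : (1 <= #|subs e A r|)%N.
    rewrite card_gt0; apply/set0Pn; exists [set r]; rewrite memsubs Ar sub1set set11 !andbT.
    apply/subtreeP; split; first by apply/set0Pn; exists r; rewrite inE.
    by move=> x y; rewrite !inE => /eqP -> /eqP ->; apply: connect0.
  have L0 : nleaves e A r = 0%N by lia.
  rewrite L0 d0 expn0; split => //; [nia | lia].
have /set0Pn [x xAr] : A :\ r != set0.
  by rewrite -card_gt0; have := cardsD1 r A; rewrite rA; lia.
have xr : x != r by move: xAr; rewrite !inE => /andP [].
have xA : x \in A by move: xAr; rewrite !inE => /andP [].
have /connectP [[|c p] /= pth lp] := Acon r x rA xA.
  by move: xr; rewrite lp eqxx.
move: pth; rewrite inducedE => /andP [/and3P [_ cA erc] _].
have [[rA' cC cardA A'con Ccon] [[acA' acC t3A' t3C degr] [degc nl d0 Nsp Ssp]]] :=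
  split_facts es eirr rA cA erc Acon Aac At3 (erefl [set x | connect (induced e (A :\ r)) c x]).
set C := [set x | connect (induced e (A :\ r)) c x] in cC cardA Ccon acC t3C degr degc nl d0 Nsp Ssp rA' A'con acA' t3A' *.
have C0 : (0 < #|C|)%N by rewrite card_gt0; apply/set0Pn; exists c.
have A0 : (0 < #|A :\: C|)%N by rewrite card_gt0; apply/set0Pn; exists r.
have lt1 : (#|A :\: C| < m)%N by lia.
have lt2 : (#|C| < m)%N by lia.
have [a1 a2 a3] := IH _ lt1 (A :\: C) r erefl rA' A'con acA' t3A'.
have [c1 c2 c3] := IH _ lt2 C c erefl cC Ccon acC t3C.
have a4 := nleaves_lt e rA'.
have c4 := nleaves_lt e cC.
have /andP [cz1 cz2] := subs_size e C c.
case: (boolP (degA e C c == 0%N)) => dC0.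
  have nC1 := d0 dC0.
  rewrite dC0 in nl.
  apply: (arith_single' a1 a2 a3 a4 _ _ Nsp Ssp) => //.
  - by apply: leq_trans c2; rewrite expn_gt0.
  - by move: cz1 cz2; rewrite nC1 mul1n; lia.
  - by rewrite cardA nC1.
  - by rewrite nl; move: c4; rewrite nC1; lia.
have dC2 : (2 <= degA e C c)%N.
  have cr : c != r by apply: contraTneq erc => ->; rewrite eirr.
  have := At3 c cA cr; rewrite degc; move: dC0; lia.
rewrite (negPf dC0) addn0 in nl.
exact: (arith_multi a1 a2 a3 a4 c1 c2 c3 c4 dC2 Nsp Ssp cardA nl degr).
Qed.

Unset Implicit Arguments.
Local Open Scope ring_scope.

Theorem mainTheorem12 (T : finType) (e : rel T) (v : T) :
  is_tree e -> in_T3star e v ->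
  (#|T|%:R + 1) / 2 + ((num_nonleaves e v)%:R - 1) / 10 <= lambda e v.
Proof.
move=> tr t3s; have tr' := tr; case: tr' => es eirr econ _.
have degT x : degA e setT x = deg e x.
  by rewrite /degA /deg; apply: eq_card => y; rewrite !inE.
have con : connset e setT.
  move=> x y _ _; rewrite (@eq_connect _ _ e) // => a b; by rewrite inducedE !inE.
have t3T : t3 e setT v.
  move=> x _ xv; rewrite !degT; case: t3s => [T1|[_ H]]; last exact: H.
  have : (2 <= #|T|)%N by apply: leq_trans (max_card (mem [set x; v])); rewrite cards2 xv.
  by rewrite T1.
have [h1 h2 _] := main_ind es eirr erefl (in_setT v) con (acyc_tree tr) t3T.
have nlE : num_nonleaves e v = (#|T| - nleaves e setT v)%N.
  rewrite /num_nonleaves /nleaves sum_bool.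
  have -> : [set x in setT | leafA e setT v x] = [set x | leaf e v x].
    by apply/setP => x; rewrite !inE /leafA /leaf degT.
  have -> : [set x | ~~ leaf e v x] = ~: [set x | leaf e v x].
    by apply/setP => x; rewrite !inE.
  by rewrite -(cardsC [set x | leaf e v x]) addKn.
have subE : subtrees_at e v = subs e setT v.
  by apply/setP => S; rewrite !inE subsetT andbT.
rewrite /lambda subE -/(ssum e setT v) nlE.
rewrite cardsT in h1.
move: h1 h2; set N := #|subs e setT v|; set S := ssum e setT v; set L := nleaves e setT v.
move=> h1 h2.
have N0 : (0 < N)%N by apply: leq_trans h2; rewrite expn_gt0.
have N0r : 0 < N%:R :> rat by rewrite ltr0n.
rewrite ler_pdivlMr //.
have hr : ((N * (5 * #|T| + (#|T| - L) + 4))%:R <= (10 * S)%:R :> rat) by rewrite ler_nat.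
move: hr; rewrite natrM natrD natrD natrM natrM.
move: (#|T| - L)%N => k; move: #|T| => n.
move=> hr.
have -> : ((n%:R + 1) / 2 + (k%:R - 1) / 10) * N%:R =
          N%:R * (5%:R * n%:R + k%:R + 4%:R) / 10 :> rat.
  by field.
by rewrite ler_pdivrMr // [S%:R * _]mulrC.
Qed.
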